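(* For any density operators $\varrho,\sigma$ on a finite-dimensional Hilbert space and any $\alpha,\beta\in(0,1)$, \[ D_\alpha(\varrho\|\sigma)\ge\frac{\alpha(1-\beta)}{\alpha-2\alpha\beta+\beta}D_\beta(\varrho\|\sigma). \]
   Context: $D_\alpha(\varrho\|\sigma)=\frac{1}{\alpha-1}\log\operatorname{Tr}\varrho^\alpha\sigma^{1-\alpha}$ is the Petz-type Rényi divergence for $\alpha\in(0,1)$ (real powers taken on the support; $+\infty$ if the trace is $0$). *)

(* Defs.v *)
From HB Require Import structures.
From mathcomp Require Import all_boot all_order all_algebra.
From mathcomp Require Import sesquilinear spectral.
From mathcomp Require Import complex.
From mathcomp Require Import all_classical all_reals ereal exp.

Set Implicit Arguments.
Unset Strict Implicit.
Unset Printing Implicit Defensive.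

Import Order.TTheory GRing.Theory Num.Theory Num.Def.
Local Open Scope ring_scope.
Local Open Scope complex_scope.

Definition psdmx (R : realType) (n : nat) (A : 'M[R[i]]_n) : Prop :=
  A \is hermsymmx /\
  forall u : 'rV[R[i]]_n, 0 <= (u *m A *m (map_mx conjC u^T)) 0 0.

Definition density (R : realType) (n : nat) (A : 'M[R[i]]_n) : Prop :=
  psdmx A /\ \tr A = 1.

(* functional calculus A |-> A^a with the real power taken on the support
   (eigenvalue 0 is sent to 0), via the unitary spectral decomposition
   A = P^-1 diag(d) P of mathcomp's spectral.v *)
Definition mxpow_supp (R : realType) (n : nat) (a : R) (A : 'M[R[i]]_n)
  : 'M[R[i]]_n :=
  invmx (spectralmx A)
  *m diag_mx (map_mx (fun x : R[i] =>
        if x == 0 then 0 else (powR (complex.Re x) a)%:C) (spectral_diag A))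
  *m spectralmx A.

(* Tr rho^a sigma^(1-a)  (a real number for density operators) *)
Definition petz_trace (R : realType) (n : nat) (a : R) (rho sigma : 'M[R[i]]_n)
  : R :=
  complex.Re (\tr (mxpow_supp a rho *m mxpow_supp (1 - a) sigma)).

Definition petz_renyi (R : realType) (n : nat) (a : R) (rho sigma : 'M[R[i]]_n)
  : \bar R :=
  let t := petz_trace a rho sigma in
  if t == 0 then +oo%E else ((ln t) / (a - 1))%:E.

(* Main.v *)
Require Import Defs.
From HB Require Import structures.
From mathcomp Require Import all_boot all_order all_algebra.
From mathcomp Require Import sesquilinear spectral.
From mathcomp Require Import complex.
From mathcomp Require Import all_classical all_reals all_analysis.
From mathcomp Require Import ring lra.
Set Implicit Arguments.
Unset Strict Implicit.
Unset Printing Implicit Defensive.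
Import Order.TTheory GRing.Theory Num.Theory Num.Def.
Local Open Scope ring_scope.
Local Open Scope sesquilinear_scope.

Lemma expR_conv (R : realType) (t u v : R) : 0 <= t -> t <= 1 ->
  expR (t * u + (1 - t) * v) <= t * expR u + (1 - t) * expR v.
Proof.
move=> t0 t1.
have := @convex_expR R (Itv01 t0 t1) u v.
by rewrite !convRE /=.
Qed.

Definition fp (R : realType) (t x : R) : R := if x == 0 then 0 else powR x t.

Lemma fp_ge0 (R : realType) (t x : R) : 0 <= fp t x.
Proof. by rewrite /fp; case: ifP => // _; exact: powR_ge0. Qed.

Lemma fp_eq0 (R : realType) (t x : R) : (fp t x == 0) = (x == 0).
Proof.
rewrite /fp; case: ifPn => [_|x0]; first by rewrite eqxx.
by rewrite powR_eq0 (negbTE x0).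
Qed.

Lemma fpE (R : realType) (t x : R) : 0 < x -> fp t x = expR (t * ln x).
Proof. by move=> x0; rewrite /fp gt_eqF // /powR gt_eqF. Qed.

Section Q.
Variables (R : realType) (n : nat) (p q : 'I_n -> R) (w : 'I_n -> 'I_n -> R).
Hypotheses (p0 : forall i, 0 <= p i) (q0 : forall j, 0 <= q j)
  (w0 : forall i j, 0 <= w i j) (sp : \sum_i p i = 1) (sq : \sum_j q j = 1)
  (sw1 : forall i, \sum_j w i j = 1) (sw2 : forall j, \sum_i w i j = 1).

Definition Qf (t : R) := \sum_i \sum_j w i j * (fp t (p i) * fp (1 - t) (q j)).

Lemma Qf_ge0 t : 0 <= Qf t.
Proof.
by apply: sumr_ge0 => i _; apply: sumr_ge0 => j _;
  rewrite mulr_ge0 // mulr_ge0 // fp_ge0.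
Qed.

Lemma term_le1 t (pp qq ww : R) : 0 <= t -> t <= 1 -> 0 <= pp -> 0 <= qq ->
  0 <= ww -> ww * (fp t pp * fp (1 - t) qq) <= t * (ww * pp) + (1 - t) * (ww * qq).
Proof.
move=> t0 t1 pp0 qq0 ww0.
have t10 : 0 <= 1 - t by rewrite subr_ge0.
have [->|pnz] := eqVneq pp 0.
  by rewrite /fp eqxx !mul0r mulr0 addr_ge0 // !mulr_ge0.
have [->|qnz] := eqVneq qq 0.
  by rewrite /fp eqxx !mulr0 addr_ge0 // !mulr_ge0.
have pp1 : 0 < pp by rewrite lt_neqAle eq_sym pnz.
have qq1 : 0 < qq by rewrite lt_neqAle eq_sym qnz.
rewrite !fpE // -expRD.
have := expR_conv (ln pp) (ln qq) t0 t1.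
rewrite !lnK ?posrE // => H.
by rewrite (le_trans (ler_wpM2l ww0 H)) // mulrDr !mulrA (mulrC ww) (mulrC ww).
Qed.

Lemma Qf_le1 t : 0 <= t -> t <= 1 -> Qf t <= 1.
Proof.
move=> t0 t1.
apply: (@le_trans _ _ (\sum_i \sum_j (t * (w i j * p i) + (1 - t) * (w i j * q j)))).
  apply: ler_sum => i _; apply: ler_sum => j _; exact: term_le1.
rewrite (eq_bigr (fun i => t * p i + (1 - t) * \sum_j (w i j * q j))); last first.
  move=> i _; rewrite big_split /= -!mulr_sumr; congr (_ + _).
  by rewrite -mulr_suml sw1 mul1r.
rewrite big_split /= -mulr_sumr sp mulr1 -mulr_sumr exchange_big /=.
rewrite (eq_bigr (fun j => q j)) ?sq ?mulr1 ?subrKC //.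
by move=> j _; rewrite -mulr_suml sw2 mul1r.
Qed.

Lemma Qf_eq0 t s : Qf t = 0 -> Qf s = 0.
Proof.
move=> /eqP; rewrite psumr_eq0; last first.
  by move=> i _; apply: sumr_ge0 => j _; rewrite mulr_ge0 // mulr_ge0 // fp_ge0.
move=> /allP H; apply/eqP; rewrite psumr_eq0; last first.
  by move=> i _; apply: sumr_ge0 => j _; rewrite mulr_ge0 // mulr_ge0 // fp_ge0.
apply/allP => i iin; have := H i iin; rewrite implyTb psumr_eq0; last first.
  by move=> j _; rewrite mulr_ge0 // mulr_ge0 // fp_ge0.
rewrite psumr_eq0; last first.
  by move=> j _; rewrite mulr_ge0 // mulr_ge0 // fp_ge0.
move=> /allP H2; apply/allP => j jin; have := H2 j jin.
by rewrite !implyTb !mulf_eq0 !fp_eq0.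
Qed.


Lemma Qf_holder th b e a : 0 < th -> th <= 1 -> a = th * b + (1 - th) * e ->
  0 <= e -> e <= 1 -> 0 < Qf b -> 0 < Qf a -> ln (Qf a) <= th * ln (Qf b).
Proof.
move=> th0 th1 ae e0 e1 Qb0 Qa0.
set beta := Qf b; set K := expR (th * ln beta).
have th10 : 0 <= 1 - th by rewrite subr_ge0.
have K0 : 0 < K by exact: expR_gt0.
suff : Qf a <= K.
  by move=> H; rewrite -[X in _ <= X](expRK) ler_ln ?posrE.
apply: (@le_trans _ _ (\sum_i \sum_j
   (K * th / beta * (w i j * (fp b (p i) * fp (1 - b) (q j))) +
    K * (1 - th) * (w i j * (fp e (p i) * fp (1 - e) (q j)))))).
  apply: ler_sum => i _; apply: ler_sum => j _.
  have c10 : 0 <= K * th / beta := divr_ge0 (mulr_ge0 (ltW K0) (ltW th0)) (ltW Qb0).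
  have c20 : 0 <= K * (1 - th) := mulr_ge0 (ltW K0) th10.
  have [->|pnz] := eqVneq (p i) 0.
    by rewrite /fp eqxx !mul0r !mulr0 addr0.
  have [->|qnz] := eqVneq (q j) 0.
    by rewrite /fp eqxx !mulr0 addr0.
  have pp1 : 0 < p i by rewrite lt_neqAle eq_sym pnz p0.
  have qq1 : 0 < q j by rewrite lt_neqAle eq_sym qnz q0.
  rewrite !fpE // -!expRD.
  set Lb := b * ln (p i) + (1 - b) * ln (q j).
  set Le := e * ln (p i) + (1 - e) * ln (q j).
  have -> : a * ln (p i) + (1 - a) * ln (q j) =
            th * ln beta + (th * (Lb - ln beta) + (1 - th) * Le).
    by rewrite /Lb /Le ae; ring.
  rewrite expRD -/K.
  have := expR_conv (Lb - ln beta) Le (ltW th0) th1.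
  rewrite expRB lnK ?posrE // => H.
  have := ler_wpM2l (w0 i j) (ler_wpM2l (ltW K0) H).
  move/le_trans; apply.
  by rewrite le_eqVlt; apply/orP; left; apply/eqP; field; rewrite gt_eqF.
under eq_bigr do rewrite big_split /= -!mulr_sumr.
rewrite big_split /= -!mulr_sumr -/(Qf b) -/(Qf e) -/beta.
have Qe1 := Qf_le1 e0 e1.
have -> : K * th / beta * beta = K * th by rewrite mulfVK // gt_eqF.
have : K * (1 - th) * Qf e <= K * (1 - th) by rewrite ler_piMr // mulr_ge0 // ltW.
lra.
Qed.

Definition ren t : \bar R := if Qf t == 0 then +oo%E else (ln (Qf t) / (t - 1))%:E.

Lemma main_real a b : 0 < a < 1 -> 0 < b < 1 ->
  ((a * (1 - b) / (a - 2 * a * b + b))%:E * ren b <= ren a)%E.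
Proof.
move=> /andP[a0 a1] /andP[b0 b1].
have D0 : 0 < a - 2 * a * b + b.
  have : 0 < a * (1 - b) by rewrite mulr_gt0 // subr_gt0.
  have : 0 < b * (1 - a) by rewrite mulr_gt0 // subr_gt0.
  lra.
have c0 : 0 < a * (1 - b) / (a - 2 * a * b + b).
  by rewrite divr_gt0 // mulr_gt0 // subr_gt0.
rewrite /ren; have [Qb0|Qb0] := eqVneq (Qf b) 0.
  by rewrite (Qf_eq0 a Qb0) eqxx mulry gtr0_sg // mul1e.
have Qa0 : Qf a != 0 by apply: contra Qb0 => /eqP H; rewrite (Qf_eq0 b H).
rewrite (negbTE Qa0) -EFinM lee_fin.
have QA : 0 < Qf a by rewrite lt_neqAle eq_sym Qa0 Qf_ge0.
have QB : 0 < Qf b by rewrite lt_neqAle eq_sym Qb0 Qf_ge0.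
have lA0 : ln (Qf a) <= 0 by rewrite ln_le0 // Qf_le1 // ltW.
have lB0 : ln (Qf b) <= 0 by rewrite ln_le0 // Qf_le1 // ltW.
set lA := ln (Qf a) in lA0 *; set lB := ln (Qf b) in lB0 *.
set D := a - 2 * a * b + b in D0 c0 *.
suff key : lA * D <= a * (1 - a) * lB.
  rewrite -subr_ge0.
  have -> : lA / (a - 1) - a * (1 - b) / D * (lB / (b - 1)) =
            (a * (1 - a) * lB - lA * D) / ((1 - a) * D).
    have ha1 : a - 1 != 0 by rewrite lt_eqF // subr_lt0.
    have ha2 : 1 - a != 0 by rewrite gt_eqF // subr_gt0.
    have hb1 : b - 1 != 0 by rewrite lt_eqF // subr_lt0.
    have hD : D != 0 by rewrite gt_eqF.
    by field; rewrite ha1 ha2 hb1 hD.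
  by rewrite divr_ge0 ?subr_ge0 // mulr_ge0 // ltW // subr_gt0.
have [ab|ba] := leP a b.
  have H : lA <= a / b * lB.
    apply: (@Qf_holder (a / b) b 0 a) => //.
    - by rewrite divr_gt0.
    - by rewrite ler_pdivrMr // mul1r.
    - by rewrite mulr0 addr0 mulfVK // gt_eqF.
  have H2 : b * lA <= a * lB.
    have -> : a * lB = b * (a / b * lB) by field; rewrite gt_eqF.
    by rewrite ler_pM2l.
  have h1 : 0 <= a * (1 - b) by rewrite mulr_ge0 // ltW // subr_gt0.
  have h2 : 0 <= 1 - a by rewrite subr_ge0 ltW.
  rewrite /D; nra.
have H : lA <= (1 - a) / (1 - b) * lB.
  apply: (@Qf_holder ((1 - a) / (1 - b)) b 1 a) => //.
  - by rewrite divr_gt0 // subr_gt0.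
  - by rewrite ler_pdivrMr ?mul1r ?subr_gt0 // lerB // ltW.
  - by field; rewrite gt_eqF // subr_gt0.
have H2 : (1 - b) * lA <= (1 - a) * lB.
  have b10 : 0 < 1 - b by rewrite subr_gt0.
  have -> : (1 - a) * lB = (1 - b) * ((1 - a) / (1 - b) * lB) by field; rewrite gt_eqF.
  by rewrite ler_pM2l.
have h1 : 0 <= b * (1 - a) by rewrite mulr_ge0 // ltW // subr_gt0.
have h2 : 0 <= a by rewrite ltW.
rewrite /D; nra.
Qed.

End Q.

Section Mx.
Variable R : realType.
Local Notation C := (R[i]).

Lemma herm_decomp n (A : 'M[C]_n) : A \is hermsymmx ->
  A = (spectralmx A)^t* *m diag_mx (spectral_diag A) *m spectralmx A.
Proof.
move=> H; rewrite -invmx_unitary ?spectral_unitarymx //.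
exact/orthomx_spectralP/hermitian_normalmx.
Qed.

Lemma unit_r n (P : 'M[C]_n) : P \is unitarymx -> P^t* *m P = 1%:M.
Proof. by move=> Pu; rewrite -invmx_unitary // mulVmx // unitarymx_unit. Qed.

Lemma ge0_complex (z : C) : 0 <= z -> z = (complex.Re z)%:C%C /\ 0 <= complex.Re z.
Proof. by case: z => x y; rewrite lecE /= => /andP[/eqP -> H]. Qed.

Lemma psd_diag n (A : 'M[C]_n) : psdmx A -> forall j, 0 <= spectral_diag A 0 j.
Proof.
move=> [H psd] j; set P := spectralmx A; set d := spectral_diag A.
have Pu : P \is unitarymx by exact: spectral_unitarymx.
pose e : 'rV[C]_n := delta_mx 0 j.
have := psd (e *m P).
have -> : e *m P *m A *m map_mx conjC (e *m P)^T =
          e *m diag_mx d *m e^t*.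
  rewrite {1}(herm_decomp H) -/P -/d trmx_mul map_mxM !mulmxA.
  by rewrite !mulmxtVK.
rewrite /e -rowE row_diag_mx -scalemxAl mxE.
rewrite !mxE (bigD1 j) //= big1 => [|k kj]; last by rewrite !mxE (negbTE kj) mul0r.
by rewrite !mxE !eqxx /= conjC1 mulr1 addr0 mulr1.
Qed.

Lemma unit_sum_row n (M : 'M[C]_n) i : M *m M^t* = 1%:M ->
  \sum_j M i j * conjC (M i j) = 1.
Proof.
move/matrixP/(_ i i); rewrite !mxE eqxx mulr1n => <-.
by apply: eq_bigr => j _; rewrite !mxE.
Qed.

Lemma unit_sum_col n (M : 'M[C]_n) j : M^t* *m M = 1%:M ->
  \sum_i M i j * conjC (M i j) = 1.
Proof.
move/matrixP/(_ j j); rewrite !mxE eqxx mulr1n => <-.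
by apply: eq_bigr => i _; rewrite !mxE mulrC.
Qed.

Lemma tr_formula n (P1 P2 : 'M[C]_n) (a b : 'rV[C]_n) :
  \tr (P1^t* *m diag_mx a *m P1 *m (P2^t* *m diag_mx b *m P2)) =
  \sum_i \sum_j a 0 i * b 0 j *
     ((P1 *m P2^t*) i j * conjC ((P1 *m P2^t*) i j)).
Proof.
set W := P1 *m P2^t*.
have hW : P2 *m P1^t* = W^t* by rewrite /W trmx_mul map_mxM trmxCK.
have -> : P1^t* *m diag_mx a *m P1 *m (P2^t* *m diag_mx b *m P2) =
          P1^t* *m (diag_mx a *m W *m diag_mx b *m P2) by rewrite /W !mulmxA.
clearbody W.
rewrite mxtrace_mulC ?mulmxA -[X in \tr X]mulmxA hW.
rewrite /mxtrace; apply: eq_bigr => i _; rewrite mxE.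
apply: eq_bigr => j _; rewrite mul_mx_diag mul_diag_mx !mxE.
ring.
Qed.

Lemma complex_sum_eq1 n (f : 'I_n -> R) : \sum_i (f i)%:C%C = 1 -> \sum_i f i = 1.
Proof. by move=> H; apply: complexI; rewrite rmorph_sum rmorph1. Qed.

Lemma density_data n (A : 'M[C]_n) : density A ->
  [/\ spectralmx A \is unitarymx,
      forall i, spectral_diag A 0 i = (complex.Re (spectral_diag A 0 i))%:C%C /\
                0 <= complex.Re (spectral_diag A 0 i) &
      \sum_i complex.Re (spectral_diag A 0 i) = 1].
Proof.
move=> [psd tr1]; have Pu := spectral_unitarymx A.
have hd : forall i, spectral_diag A 0 i = (complex.Re (spectral_diag A 0 i))%:C%C /\
                0 <= complex.Re (spectral_diag A 0 i).
  by move=> i; apply: ge0_complex; exact: psd_diag.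
split => //; apply: complex_sum_eq1.
rewrite -tr1 {2}(herm_decomp psd.1) -mulmxA mxtrace_mulC mulmxtVK // mxtrace_diag.
by apply: eq_bigr => i _; rewrite -(hd i).1.
Qed.

Lemma mxpow_lem n (A : 'M[C]_n) (t : R) : density A ->
  mxpow_supp t A = (spectralmx A)^t* *m
     diag_mx (\row_i (fp t (complex.Re (spectral_diag A 0 i)))%:C%C) *m spectralmx A.
Proof.
move=> dA; have [Pu hd _] := density_data dA.
rewrite /mxpow_supp invmx_unitary //; congr (_ *m diag_mx _ *m _).
apply/rowP => i; rewrite !mxE /fp.
rewrite [in LHS](hd i).1 /= fmorph_eq0.
by case: ifP => _; rewrite ?rmorph0.
Qed.

End Mx.

Theorem mainTheorem13 (R : realType) (n : nat) (rho sigma : 'M[R[i]]_n)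
    (a b : R) :
  density rho -> density sigma ->
  0 < a < 1 -> 0 < b < 1 ->
  ((a * (1 - b) / (a - 2 * a * b + b))%:E * petz_renyi b rho sigma
     <= petz_renyi a rho sigma)%E.
Proof.
move=> dr ds ha hb.
have [Pu1 hd1 s1] := density_data dr.
have [Pu2 hd2 s2] := density_data ds.
pose p i := complex.Re (spectral_diag rho 0 i).
pose q i := complex.Re (spectral_diag sigma 0 i).
pose W := spectralmx rho *m (spectralmx sigma)^t*.
pose w i j := complex.Re (W i j * conjC (W i j)).
have hw : forall i j, W i j * conjC (W i j) = (w i j)%:C%C /\ 0 <= w i j.
  by move=> i j; apply: ge0_complex; exact: mul_conjC_ge0.
have p0 : forall i, 0 <= p i by move=> i; exact: (hd1 i).2.
have q0 : forall i, 0 <= q i by move=> i; exact: (hd2 i).2.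
have w0 : forall i j, 0 <= w i j by move=> i j; exact: (hw i j).2.
have WtW : W^t* = spectralmx sigma *m (spectralmx rho)^t*.
  by rewrite /W trmx_mul map_mxM trmxCK.
have sw1 : forall i, \sum_j w i j = 1.
  move=> i; apply: complex_sum_eq1; rewrite -(@unit_sum_row _ _ W i).
    by apply: eq_bigr => j _; rewrite -(hw i j).1.
  rewrite WtW /W !mulmxA -[X in X *m _ = _]mulmxA unit_r // mulmx1.
  exact/unitarymxP.
have sw2 : forall j, \sum_i w i j = 1.
  move=> j; apply: complex_sum_eq1; rewrite -(@unit_sum_col _ _ W j).
    by apply: eq_bigr => i _; rewrite -(hw i j).1.
  rewrite WtW /W !mulmxA -[X in X *m _ = _]mulmxA unit_r // mulmx1.
  exact/unitarymxP.
have hpt : forall t, petz_trace t rho sigma = Qf p q w t.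
  move=> t; rewrite /petz_trace (mxpow_lem t dr) (mxpow_lem (1 - t) ds) tr_formula.
  rewrite (eq_bigr (fun i => (\sum_j w i j * (fp t (p i) * fp (1 - t) (q j)))%:C%C)).
    by rewrite -rmorph_sum.
  move=> i _; rewrite rmorph_sum; apply: eq_bigr => j _.
  rewrite (hw i j).1 !mxE -!rmorphM; congr (_%:C%C).
  by rewrite mulrC.
have hren : forall t, petz_renyi t rho sigma = ren p q w t.
  by move=> t; rewrite /petz_renyi /ren hpt.
rewrite !hren; exact: main_real.
Qed.
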